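(* Over strict timed traces, every metric formula is MHT-equivalent to a metric formula in unary normal form.
   Context: Metric formulas over $\mathcal{A}$: $\varphi ::= p \mid \bot \mid \varphi_1\otimes\varphi_2 \mid \bullet_I\varphi \mid \varphi_1\,\mathsf{S}_I\,\varphi_2 \mid \varphi_1\,\mathsf{T}_I\,\varphi_2 \mid \bigcirc_I\varphi \mid \varphi_1\,\mathsf{U}_I\,\varphi_2 \mid \varphi_1\,\mathsf{R}_I\,\varphi_2$, $\otimes\in\{\to,\wedge,\vee\}$, $I=[m,n)$, $m\in\mathbb{N}$, $n\in\mathbb{N}\cup\{\omega\}$; omitted subscript means $[0,\omega)$. Derived unary operators: $\blacksquare_I\varphi=\bot\,\mathsf{T}_I\,\varphi$, eventually before $\top\,\mathsf{S}_I\,\varphi$, $\widehat{\bullet}_I\varphi=\bullet_I\varphi\vee\neg\bullet_I\top$, $\Box_I\varphi=\bot\,\mathsf{R}_I\,\varphi$, $\Diamond_I\varphi=\top\,\mathsf{U}_I\,\varphi$, $\widehat{\bigcirc}_I\varphi=\bigcirc_I\varphi\vee\neg\bigcirc_I\top$ (with $\neg\varphi=\varphi\to\bot$, $\top=\neg\bot$). A metric formula is in unary normal form if intervals only affect unary temporal operators ($\bigcirc_I,\widehat{\bigcirc}_I,\Diamond_I,\Box_I,\bullet_I,\widehat{\bullet}_I,\blacksquare_I$, eventually before), while the binary operators $\mathsf{U},\mathsf{R},\mathsf{S},\mathsf{T}$ occur only with interval $[0,\omega)$ (no attached interval). Timed HT-trace $\mathbf{M}=(\langle\mathbf{H},\mathbf{T}\rangle,\tau)$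 of length $\lambda$: $H_i\subseteq T_i\subseteq\mathcal{A}$, $\tau:[0,\lambda)\to\mathbb{N}$, $\tau(0)=0$; strict means $\tau(i)<\tau(i+1)$ whenever $i+1<\lambda$. Satisfaction at $k$: $\bot$ never; $p$ iff $p\in H_k$; $\wedge,\vee$ usual; $\varphi\to\psi$ iff for both $\mathbf{M}'=\mathbf{M}$ and $\mathbf{M}'=(\langle\mathbf{T},\mathbf{T}\rangle,\tau)$, $\mathbf{M}',k\not\models\varphi$ or $\mathbf{M}',k\models\psi$; $\bullet_I\varphi$: $k>0$, $\varphi$ at $k-1$, $\tau(k)-\tau(k-1)\in I$; $\varphi\,\mathsf{S}_I\,\psi$: some $j\in[0,k]$ with $\tau(k)-\tau(j)\in I$, $\psi$ at $j$, $\varphi$ at all $i\in(j,k]$; $\varphi\,\mathsf{T}_I\,\psi$: for all such $j$, $\psi$ at $j$ or $\varphi$ at some $i\in(j,k]$; $\bigcirc_I\varphi$: $k+1<\lambda$, $\varphi$ at $k+1$, $\tau(k+1)-\tau(k)\in I$; $\varphi\,\mathsf{U}_I\,\psi$: some $j\in[k,\lambda)$ with $\tau(j)-\tau(k)\in I$, $\psi$ at $j$, $\varphi$ at all $i\in[k,j)$; $\varphi\,\mathsf{R}_I\,\psi$: for all such $j$, $\psi$ at $j$ or $\varphi$ at some $i\in[k,j)$. Equivalence means $\mathbf{M},k\models\varphi\leftrightarrow\psi$ for all strict timed HT-traces and all $k$. *)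

(* Defs.v *)
From Stdlib Require Import Arith Lia.
Set Implicit Arguments.

(* ℕ ∪ {ω}: None = ω *)
Definition natw := option nat.
Definition ltw (k : nat) (n : natw) : Prop :=
  match n with Some n => k < n | None => True end.

Record interval := Itv { lo : nat; hi : natw }.
Definition in_itv (d : nat) (J : interval) : Prop := lo J <= d /\ ltw d (hi J).
Definition full : interval := Itv 0 None.

Inductive formula (A : Type) : Type :=
| Atom : A -> formula A
| Bot : formula A
| Impl : formula A -> formula A -> formula A
| And : formula A -> formula A -> formula A
| Or : formula A -> formula A -> formula A
| Prev : interval -> formula A -> formula A
| Since : interval -> formula A -> formula A -> formula A
| Trigger : interval -> formula A -> formula A -> formula A
| Next : interval -> formula A -> formula A
| Until : interval -> formula A -> formula A -> formula A
| Release : interval -> formula A -> formula A -> formula A.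
Arguments Bot {A}.

Definition Neg A (f : formula A) := Impl f Bot.
Definition Top {A} : formula A := Neg Bot.
Definition Equiv A (f g : formula A) := And (Impl f g) (Impl g f).

Fixpoint sat A (H T : nat -> A -> Prop) (tau : nat -> nat) (lam : natw)
    (k : nat) (f : formula A) {struct f} : Prop :=
  match f with
  | Atom p => H k p
  | Bot => False
  | Impl f g =>
      (sat H T tau lam k f -> sat H T tau lam k g) /\
      (sat T T tau lam k f -> sat T T tau lam k g)
  | And f g => sat H T tau lam k f /\ sat H T tau lam k g
  | Or f g => sat H T tau lam k f \/ sat H T tau lam k g
  | Prev J f => 0 < k /\ sat H T tau lam (k - 1) f /\ in_itv (tau k - tau (k - 1)) J
  | Since J f g => exists j, j <= k /\ in_itv (tau k - tau j) J /\
      sat H T tau lam j g /\ (forall i, j < i <= k -> sat H T tau lam i f)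
  | Trigger J f g => forall j, j <= k -> in_itv (tau k - tau j) J ->
      sat H T tau lam j g \/ (exists i, j < i <= k /\ sat H T tau lam i f)
  | Next J f => ltw (k + 1) lam /\ sat H T tau lam (k + 1) f /\
      in_itv (tau (k + 1) - tau k) J
  | Until J f g => exists j, k <= j /\ ltw j lam /\ in_itv (tau j - tau k) J /\
      sat H T tau lam j g /\ (forall i, k <= i < j -> sat H T tau lam i f)
  | Release J f g => forall j, k <= j -> ltw j lam -> in_itv (tau j - tau k) J ->
      sat H T tau lam j g \/ (exists i, k <= i < j /\ sat H T tau lam i f)
  end.

Record timed_trace (A : Type) := TTrace {
  tr_len : natw;
  tr_H : nat -> A -> Prop;
  tr_T : nat -> A -> Prop;
  tr_tau : nat -> nat;
  tr_HT : forall i p, ltw i tr_len -> tr_H i p -> tr_T i p;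
  tr_tau0 : tr_tau 0 = 0 }.

Definition strict A (M : timed_trace A) : Prop :=
  forall i, ltw (i + 1) (tr_len M) -> tr_tau M i < tr_tau M (i + 1).

Definition msat A (M : timed_trace A) (k : nat) (f : formula A) : Prop :=
  sat (tr_H M) (tr_T M) (tr_tau M) (tr_len M) k f.

Definition mequiv A (f g : formula A) : Prop :=
  forall M : timed_trace A, strict M ->
    forall k, ltw k (tr_len M) -> msat M k (Equiv f g).

(* Unary normal form: intervals only on the (derived) unary operators
   ○_I, ●_I, ◇_I = ⊤ U_I φ, □_I = ⊥ R_I φ, ⧫_I = ⊤ S_I φ, ■_I = ⊥ T_I φ
   (○̂_I, •̂_I are built from ○_I/●_I, ∨, →, ⊥); binary U,R,S,T only with [0,ω). *)
Inductive unf A : formula A -> Prop :=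
| unf_atom p : unf (Atom p)
| unf_bot : unf Bot
| unf_impl f g : unf f -> unf g -> unf (Impl f g)
| unf_and f g : unf f -> unf g -> unf (And f g)
| unf_or f g : unf f -> unf g -> unf (Or f g)
| unf_prev J f : unf f -> unf (Prev J f)
| unf_next J f : unf f -> unf (Next J f)
| unf_since f g : unf f -> unf g -> unf (Since full f g)
| unf_trigger f g : unf f -> unf g -> unf (Trigger full f g)
| unf_until f g : unf f -> unf g -> unf (Until full f g)
| unf_release f g : unf f -> unf g -> unf (Release full f g)
| unf_once J f : unf f -> unf (Since J Top f)
| unf_historically J f : unf f -> unf (Trigger J Bot f)
| unf_eventually J f : unf f -> unf (Until J Top f)
| unf_always J f : unf f -> unf (Release J Bot f).

(* Main.v *)
Require Import Defs.
From Stdlib Require Import Arith Lia Classical Setoid.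

Section Tr.
Variable A : Type.

Definition subw (n : natw) (d : nat) : natw :=
  match n with Some n => Some (n - d) | None => None end.

Fixpoint bigor (G : nat -> formula A) (c : nat) : formula A :=
  match c with 0 => Bot | S c' => Or (G c) (bigor G c') end.

Fixpoint untilT (fuel m : nat) (n : natw) (a b : formula A) : formula A :=
  match fuel, m with
  | S f, S m' => And a (Or (And (Next (Itv m None) (Until full a b)) (Until (Itv m n) Top b))
        (bigor (fun d => Next (Itv d (Some (d+1))) (untilT f (m - d) (subw n d) a b)) m'))
  | _, _ => And (Until (Itv 0 n) Top b) (Until full a b)
  end.

Fixpoint sinceT (fuel m : nat) (n : natw) (a b : formula A) : formula A :=
  match fuel, m with
  | S f, S m' => And a (Or (And (Prev (Itv m None) (Since full a b)) (Since (Itv m n) Top b))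
        (bigor (fun d => Prev (Itv d (Some (d+1))) (sinceT f (m - d) (subw n d) a b)) m'))
  | _, _ => And (Since (Itv 0 n) Top b) (Since full a b)
  end.

Fixpoint trigT (fuel m : nat) (n : natw) (a b : formula A) : formula A :=
  match fuel, m with
  | S f, S m' => Or a (Or (Neg (Prev full Top)) (Or (Trigger (Itv m n) Bot b)
        (Or (Prev (Itv m None) (Trigger full a b))
        (bigor (fun d => Prev (Itv d (Some (d+1))) (trigT f (m - d) (subw n d) a b)) m'))))
  | _, _ => Or (Trigger (Itv 0 n) Bot b) (Trigger full a b)
  end.

Fixpoint relT (fuel m : nat) (n : natw) (a b : formula A) : formula A :=
  match fuel, m with
  | S f, S m' => Or a (Or (Neg (Next full Top)) (Or (Release (Itv m n) Bot b)
        (Or (Next (Itv m None) (Release full a b))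
        (bigor (fun d => Next (Itv d (Some (d+1))) (relT f (m - d) (subw n d) a b)) m'))))
  | _, _ => Or (Release (Itv 0 n) Bot b) (Release full a b)
  end.

Fixpoint tr (f : formula A) : formula A :=
  match f with
  | Atom p => Atom p
  | Bot => Bot
  | Impl f g => Impl (tr f) (tr g)
  | And f g => And (tr f) (tr g)
  | Or f g => Or (tr f) (tr g)
  | Prev J f => Prev J (tr f)
  | Next J f => Next J (tr f)
  | Since J f g => sinceT (lo J) (lo J) (hi J) (tr f) (tr g)
  | Trigger J f g => trigT (lo J) (lo J) (hi J) (tr f) (tr g)
  | Until J f g => untilT (lo J) (lo J) (hi J) (tr f) (tr g)
  | Release J f g => relT (lo J) (lo J) (hi J) (tr f) (tr g)
  end.

Lemma unf_top : unf (@Top A).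
Proof. unfold Top, Neg. constructor; constructor. Qed.

Lemma unf_bigor G c : (forall d, unf (G d)) -> unf (bigor G c).
Proof. intros HG; induction c; simpl; constructor; auto. Qed.

Ltac unfs IH := repeat first [ apply unf_top | apply unf_bigor; intro | apply IH | constructor ]; auto.

Lemma unf_untilT fuel : forall m n a b, unf a -> unf b -> unf (untilT fuel m n a b).
Proof. induction fuel as [|f IH]; intros [|m] n a b Ha Hb; simpl; unfs IH. Qed.
Lemma unf_sinceT fuel : forall m n a b, unf a -> unf b -> unf (sinceT fuel m n a b).
Proof. induction fuel as [|f IH]; intros [|m] n a b Ha Hb; simpl; unfs IH. Qed.
Lemma unf_trigT fuel : forall m n a b, unf a -> unf b -> unf (trigT fuel m n a b).
Proof. induction fuel as [|f IH]; intros [|m] n a b Ha Hb; simpl; unfs IH. Qed.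
Lemma unf_relT fuel : forall m n a b, unf a -> unf b -> unf (relT fuel m n a b).
Proof. induction fuel as [|f IH]; intros [|m] n a b Ha Hb; simpl; unfs IH. Qed.

Lemma unf_tr f : unf (tr f).
Proof.
  induction f; simpl; auto using unf_untilT, unf_sinceT, unf_trigT, unf_relT; constructor; auto.
Qed.

Local Arguments Nat.sub : simpl never.
Local Arguments Nat.add : simpl never.
Section Sem.
Variables (HH TT : nat -> A -> Prop) (tau : nat -> nat) (lam : natw).
Hypothesis St : forall i, ltw (i+1) lam -> tau i < tau (i+1).
Notation sat' := (sat HH TT tau lam).

Lemma ltw_mono w i j : i <= j -> ltw j w -> ltw i w.
Proof. destruct w; simpl; intros; auto; lia. Qed.
Lemma ltw_lt w x y : ltw x w -> ~ ltw y w -> x < y.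
Proof. destruct w; simpl; intros; [lia | tauto]. Qed.
Lemma ltw_subw w x d : ltw x (subw w d) <-> ltw (x + d) w.
Proof. destruct w; simpl; [lia | tauto]. Qed.

Lemma tmono i j : i <= j -> ltw j lam -> tau i <= tau j.
Proof.
  induction 1 as [|m Hm IHm]; intros Hl; [lia|].
  assert (tau m < tau (S m)).
  { replace (S m) with (m+1) by lia. apply St. replace (m+1) with (S m) by lia; auto. }
  assert (ltw m lam) by (apply ltw_mono with (S m); auto).
  specialize (IHm H0); lia.
Qed.
Lemma tstrict i j : i < j -> ltw j lam -> tau i < tau j.
Proof.
  intros Hij Hl. assert (tau (j-1) < tau j).
  { replace j with (j-1+1) at 2 by lia. apply St. replace (j-1+1) with j by lia; auto. }
  assert (tau i <= tau (j-1)) by (apply tmono; [lia| apply ltw_mono with j; auto; lia]). lia.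
Qed.
Lemma tinv i j : ltw j lam -> ltw i lam -> tau i < tau j -> i < j.
Proof. intros Hj Hi Ht. destruct (le_lt_dec j i); auto. pose proof (tmono j i l Hi). lia. Qed.

Lemma sat_bigor G c k : sat' k (bigor G c) <-> exists d, 1 <= d <= c /\ sat' k (G d).
Proof.
  induction c; simpl.
  - split; [tauto| intros [d [? _]]; lia].
  - rewrite IHc. split.
    + intros [H|[d [? ?]]]; [exists (S c)|exists d]; split; auto; lia.
    + intros [d [? ?]]. destruct (Nat.eq_dec d (S c)); [subst; left; auto | right; exists d; split; auto; lia].
Qed.

Ltac norm := unfold Top, Neg in *; simpl in *; unfold in_itv, full in *; simpl in *.

Variables a b : formula A.

Lemma until_base n k : ltw k lam ->
  (sat' k (Until (Itv 0 n) a b) <-> sat' k (And (Until (Itv 0 n) Top b) (Until full a b))).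
Proof.
  intros Hk. norm. split.
  - intros (j & Hkj & Hjl & (_ & Hn) & Hb & Ha). split; exists j; repeat split; auto; lia.
  - intros [(j1 & Hj1 & Hj1l & (_ & Hn1) & Hb1 & _) (j2 & Hj2 & Hj2l & _ & Hb2 & Ha2)].
    destruct (le_lt_dec j2 j1).
    + exists j2. repeat split; auto; try lia. apply ltw_mono with (tau j1 - tau k); auto.
      pose proof (tmono j2 j1 l Hj1l). lia.
    + exists j1. repeat split; auto; try lia. intros; apply Ha2; lia.
Qed.

Lemma until_ok fuel : forall m n k, m <= fuel -> ltw k lam ->
  (sat' k (Until (Itv m n) a b) <-> sat' k (untilT fuel m n a b)).
Proof.
  induction fuel as [|f IH]; intros m n k Hm Hk.
  - assert (m = 0) by lia; subst. apply until_base; auto.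
  - destruct m as [|m']. { apply until_base; auto. }
    cbn [untilT]. split.
    + norm. intros (j & Hkj & Hjl & (Hlo & Hhi) & Hb & Ha).
      destruct (Nat.eq_dec j k). { subst; lia. }
      assert (Hk1 : ltw (k+1) lam) by (apply ltw_mono with j; auto; lia).
      pose proof (St k Hk1) as Hd.
      assert (tau (k+1) <= tau j) by (apply tmono; auto; lia).
      split. { apply Ha; lia. }
      destruct (le_lt_dec (S m') (tau (k+1) - tau k)).
      * left. split.
        -- split; auto. split; [|split; [lia|exact I]].
           exists j. repeat split; auto; try lia. intros; apply Ha; lia.
        -- exists j. repeat split; auto; lia.
      * right. apply sat_bigor. exists (tau (k+1) - tau k). split; [lia|]. norm.
        split; auto. split; [|lia].
        apply (proj1 (IH (S m' - (tau (k+1) - tau k)) (subw n (tau (k+1) - tau k)) (k+1) ltac:(lia) Hk1)). norm.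
        exists j. split; [lia|]. split; auto. split. split; [lia|].
        rewrite ltw_subw. replace (tau j - tau (k+1) + (tau (k+1) - tau k)) with (tau j - tau k) by lia. auto.
        split; auto. intros; apply Ha; lia.
    + intros [Hak [Hl | Hbig]].
      * norm. destruct Hl as ((Hk1 & (j1 & Hj1 & Hj1l & _ & Hb1 & Ha1) & Hd1 & _) & (j2 & Hj2 & Hj2l & (Hlo2 & Hhi2) & Hb2 & _)).
        pose proof (St k Hk1). pose proof (tmono (k+1) j1 Hj1 Hj1l).
        destruct (le_lt_dec j1 j2).
        -- exists j1. pose proof (tmono j1 j2 l Hj2l). repeat split; auto; try lia.
           apply ltw_mono with (tau j2 - tau k); auto; lia.
           intros i Hi. destruct (Nat.eq_dec i k); [subst; auto| apply Ha1; lia].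
        -- exists j2. repeat split; auto; try lia.
           intros i Hi. destruct (Nat.eq_dec i k); [subst; auto| apply Ha1; lia].
      * apply sat_bigor in Hbig. destruct Hbig as (d & Hd & Hn). norm.
        destruct Hn as (Hk1 & Hu & Hd1 & Hd2).
        pose proof (proj2 (IH (S m' - d) (subw n d) (k+1) ltac:(lia) Hk1) Hu) as Hu'. norm.
        destruct Hu' as (j & Hkj & Hjl & (Hlo & Hhi) & Hb & Ha).
        rewrite ltw_subw in Hhi. pose proof (St k Hk1). pose proof (tmono (k+1) j Hkj Hjl).
        exists j. repeat split; auto; try lia.
        replace (tau j - tau k) with (tau j - tau (k + 1) + d) by lia. auto.
        intros i Hi. destruct (Nat.eq_dec i k); [subst; auto| apply Ha; lia].
Qed.

Lemma since_base n k : ltw k lam ->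
  (sat' k (Since (Itv 0 n) a b) <-> sat' k (And (Since (Itv 0 n) Top b) (Since full a b))).
Proof.
  intros Hk. norm. split.
  - intros (j & Hjk & (_ & Hn) & Hb & Ha). split; exists j; repeat split; auto; lia.
  - intros [(j1 & Hj1 & (_ & Hn1) & Hb1 & _) (j2 & Hj2 & _ & Hb2 & Ha2)].
    destruct (le_lt_dec j1 j2).
    + exists j2. repeat split; auto; try lia. apply ltw_mono with (tau k - tau j1); auto.
      pose proof (tmono j1 j2 l (ltw_mono _ _ _ Hj2 Hk)). pose proof (tmono j2 k Hj2 Hk). lia.
    + exists j1. repeat split; auto; try lia. intros; apply Ha2; lia.
Qed.

Lemma since_ok fuel : forall m n k, m <= fuel -> ltw k lam ->
  (sat' k (Since (Itv m n) a b) <-> sat' k (sinceT fuel m n a b)).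
Proof.
  induction fuel as [|f IH]; intros m n k Hm Hk.
  - assert (m = 0) by lia; subst. apply since_base; auto.
  - destruct m as [|m']. { apply since_base; auto. }
    cbn [sinceT].
    assert (Hkk : forall j, j <= k -> ltw j lam) by (intros; apply ltw_mono with k; auto).
    split.
    + norm. intros (j & Hjk & (Hlo & Hhi) & Hb & Ha).
      destruct (Nat.eq_dec j k). { subst; lia. }
      assert (Hk1 : ltw (k-1) lam) by (apply Hkk; lia).
      pose proof (tstrict (k-1) k ltac:(lia) Hk) as Hd.
      assert (tau j <= tau (k-1)) by (apply tmono; auto; lia).
      split. { apply Ha; lia. }
      destruct (le_lt_dec (S m') (tau k - tau (k-1))).
      * left. split.
        -- split; [lia|]. split; [|split; [lia|exact I]].
           exists j. repeat split; auto; try lia. intros; apply Ha; lia.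
        -- exists j. repeat split; auto; lia.
      * right. apply sat_bigor. exists (tau k - tau (k-1)). split; [lia|]. norm.
        split; [lia|]. split; [|lia].
        apply (proj1 (IH (S m' - (tau k - tau (k-1))) (subw n (tau k - tau (k-1))) (k-1) ltac:(lia) Hk1)). norm.
        exists j. split; [lia|]. split. split; [lia|].
        rewrite ltw_subw. replace (tau (k-1) - tau j + (tau k - tau (k-1))) with (tau k - tau j) by lia. auto.
        split; auto. intros; apply Ha; lia.
    + intros [Hak [Hl | Hbig]].
      * norm. destruct Hl as ((Hk0 & (j1 & Hj1 & _ & Hb1 & Ha1) & Hd1 & _) & (j2 & Hj2 & (Hlo2 & Hhi2) & Hb2 & _)).
        pose proof (tstrict (k-1) k ltac:(lia) Hk).
        pose proof (tmono j1 (k-1) Hj1 (Hkk (k-1) ltac:(lia))).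
        destruct (Nat.eq_dec j2 k). { subst; lia. }
        destruct (le_lt_dec j2 j1).
        -- exists j1. pose proof (tmono j2 j1 l (Hkk j1 ltac:(lia))). repeat split; auto; try lia.
           apply ltw_mono with (tau k - tau j2); auto; lia.
           intros i Hi. destruct (Nat.eq_dec i k); [subst; auto| apply Ha1; lia].
        -- exists j2. repeat split; auto; try lia.
           intros i Hi. destruct (Nat.eq_dec i k); [subst; auto| apply Ha1; lia].
      * apply sat_bigor in Hbig. destruct Hbig as (d & Hd & Hn). norm.
        destruct Hn as (Hk0 & Hu & Hd1 & Hd2).
        assert (Hk1 : ltw (k-1) lam) by (apply Hkk; lia).
        pose proof (proj2 (IH (S m' - d) (subw n d) (k-1) ltac:(lia) Hk1) Hu) as Hu'. norm.
        destruct Hu' as (j & Hjk & (Hlo & Hhi) & Hb & Ha).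
        rewrite ltw_subw in Hhi. pose proof (tstrict (k-1) k ltac:(lia) Hk).
        pose proof (tmono j (k-1) Hjk Hk1).
        exists j. repeat split; auto; try lia.
        replace (tau k - tau j) with (tau (k-1) - tau j + d) by lia. auto.
        intros i Hi. destruct (Nat.eq_dec i k); [subst; auto| apply Ha; lia].
Qed.

Lemma trig_base n k : ltw k lam ->
  (sat' k (Trigger (Itv 0 n) a b) <-> sat' k (Or (Trigger (Itv 0 n) Bot b) (Trigger full a b))).
Proof.
  intros Hk.
  assert (Hkk : forall j, j <= k -> ltw j lam) by (intros; apply ltw_mono with k; auto).
  norm. split.
  - intros Tr.
    destruct (classic (exists j1, j1 <= k /\ ltw (tau k - tau j1) n /\ ~ sat' j1 b))
      as [(j1 & Hj1 & Hw1 & Hnb1) | Hno].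
    + right. intros j Hj _.
      destruct (classic (sat' j b)) as [Hb|Hnb]; [left; auto|right].
      destruct (Tr j1 Hj1 (conj (Nat.le_0_l _) Hw1)) as [?|(i1 & Hi1 & Ha1)]; [contradiction|].
      destruct (classic (ltw (tau k - tau j) n)) as [Hw|Hw].
      * destruct (Tr j Hj (conj (Nat.le_0_l _) Hw)) as [?|?]; [contradiction|auto].
      * pose proof (ltw_lt _ _ _ Hw1 Hw).
        pose proof (tmono j k Hj Hk). pose proof (tmono j1 k Hj1 Hk).
        assert (j < j1) by (apply tinv; [apply Hkk; lia | apply Hkk; lia | lia]).
        exists i1; split; auto; lia.
    + left. intros j Hj [_ Hw]. left. apply NNPP; intro; apply Hno; eauto.
  - intros [Tr | Tr] j Hj Hin.
    + destruct (Tr j Hj Hin) as [?|(i & _ & [])]; auto.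
    + apply Tr; auto; split; [lia | exact I].
Qed.

Lemma trig_ok fuel : forall m n k, m <= fuel -> ltw k lam ->
  (sat' k (Trigger (Itv m n) a b) <-> sat' k (trigT fuel m n a b)).
Proof.
  induction fuel as [|f IH]; intros m n k Hm Hk.
  - assert (m = 0) by lia; subst. apply trig_base; auto.
  - destruct m as [|m']. { apply trig_base; auto. }
    cbn [trigT].
    assert (Hkk : forall j, j <= k -> ltw j lam) by (intros; apply ltw_mono with k; auto).
    split.
    + intros Tr.
      destruct (classic (sat' k a)) as [Hak|Hnak]; [left; auto|right].
      destruct (Nat.eq_dec k 0) as [Hk0|Hk0].
      { left. norm. split; intros (? & _); lia. }
      right.
      assert (Hk1 : ltw (k-1) lam) by (apply Hkk; lia).
      pose proof (tstrict (k-1) k ltac:(lia) Hk) as Hd.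
      destruct (le_lt_dec (S m') (tau k - tau (k-1))).
      * norm.
        destruct (classic (exists j1, j1 <= k /\ (S m' <= tau k - tau j1 /\ ltw (tau k - tau j1) n) /\ ~ sat' j1 b))
          as [(j1 & Hj1 & (Hlo1 & Hw1) & Hnb1) | Hno].
        -- right. left. split; [lia|]. split; [|split; [lia|exact I]].
           intros j Hj _.
           destruct (classic (sat' j b)) as [Hb|Hnb]; [left; auto|right].
           destruct (Tr j1 Hj1 (conj Hlo1 Hw1)) as [?|(i1 & Hi1 & Ha1)]; [contradiction|].
           destruct (Nat.eq_dec i1 k). { subst; contradiction. }
           pose proof (tmono j (k-1) Hj Hk1).
           destruct (classic (ltw (tau k - tau j) n)) as [Hw|Hw].
           ++ assert (Hjk : j <= k) by lia. assert (Hlj : S m' <= tau k - tau j) by lia.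
              destruct (Tr j Hjk (conj Hlj Hw)) as [?|(i & Hi & Ha)]; [contradiction|].
              destruct (Nat.eq_dec i k). { subst; contradiction. }
              exists i; split; auto; lia.
           ++ pose proof (ltw_lt _ _ _ Hw1 Hw).
              pose proof (tmono j1 k Hj1 Hk).
              assert (j < j1) by (apply tinv; [apply Hkk; lia | apply Hkk; lia | lia]).
              exists i1; split; auto; lia.
        -- left. intros j Hj Hin. left. apply NNPP; intro; apply Hno; eauto.
      * right. right. apply sat_bigor. exists (tau k - tau (k-1)). split; [lia|]. norm.
        split; [lia|]. split; [|lia].
        apply (proj1 (IH (S m' - (tau k - tau (k-1))) (subw n (tau k - tau (k-1))) (k-1) ltac:(lia) Hk1)). norm.
        intros j Hj (Hlo & Hhi). rewrite ltw_subw in Hhi.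
        pose proof (tmono j (k-1) Hj Hk1).
        destruct (Tr j ltac:(lia)) as [Hb | (i & Hi & Ha)].
        { split; [lia|]. replace (tau k - tau j) with (tau (k-1) - tau j + (tau k - tau (k-1))) by lia. auto. }
        { left; auto. }
        destruct (Nat.eq_dec i k). { subst; contradiction. }
        right; exists i; split; auto; lia.
    + intros [Ha | [Hneg | [Hh | [Hp | Hbig]]]].
      * norm. intros j Hj (Hlo & _). destruct (Nat.eq_dec j k). { subst; lia. }
        right; exists k; split; auto; lia.
      * norm. destruct Hneg as [Hn1 _]. intros j Hj (Hlo & _).
        destruct (Nat.eq_dec k 0). { subst. assert (j = 0) by lia. subst. lia. }
        exfalso; apply Hn1. repeat split; auto; lia.
      * norm. intros j Hj Hin. destruct (Hh j Hj Hin) as [?|(i & _ & [])]; auto.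
      * norm. destruct Hp as (Hk0 & Htr & Hd & _). intros j Hj (Hlo & _).
        destruct (Nat.eq_dec j k). { subst; lia. }
        destruct (Htr j ltac:(lia) (conj (Nat.le_0_l _) I)) as [?|(i & ? & ?)]; [left; auto|right; exists i; split; auto; lia].
      * apply sat_bigor in Hbig. destruct Hbig as (d & Hd & Hn). norm.
        destruct Hn as (Hk0 & Hu & Hd1 & Hd2).
        assert (Hk1 : ltw (k-1) lam) by (apply Hkk; lia).
        pose proof (proj2 (IH (S m' - d) (subw n d) (k-1) ltac:(lia) Hk1) Hu) as Hu'. norm.
        intros j Hj (Hlo & Hhi).
        destruct (Nat.eq_dec j k). { subst; lia. }
        pose proof (tmono j (k-1) ltac:(lia) Hk1).
        destruct (Hu' j ltac:(lia)) as [?|(i & ? & ?)]; [| left; auto | right; exists i; split; auto; lia].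
        split; [lia|]. rewrite ltw_subw.
        replace (tau (k-1) - tau j + d) with (tau k - tau j) by lia. auto.
Qed.

Lemma rel_base n k : ltw k lam ->
  (sat' k (Release (Itv 0 n) a b) <-> sat' k (Or (Release (Itv 0 n) Bot b) (Release full a b))).
Proof.
  intros Hk.
  norm. split.
  - intros Rl.
    destruct (classic (exists j1, k <= j1 /\ ltw j1 lam /\ ltw (tau j1 - tau k) n /\ ~ sat' j1 b))
      as [(j1 & Hj1 & Hj1l & Hw1 & Hnb1) | Hno].
    + right. intros j Hj Hjl _.
      destruct (classic (sat' j b)) as [Hb|Hnb]; [left; auto|right].
      destruct (Rl j1 Hj1 Hj1l (conj (Nat.le_0_l _) Hw1)) as [?|(i1 & Hi1 & Ha1)]; [contradiction|].
      destruct (classic (ltw (tau j - tau k) n)) as [Hw|Hw].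
      * destruct (Rl j Hj Hjl (conj (Nat.le_0_l _) Hw)) as [?|?]; [contradiction|auto].
      * pose proof (ltw_lt _ _ _ Hw1 Hw).
        pose proof (tmono k j Hj Hjl). pose proof (tmono k j1 Hj1 Hj1l).
        assert (j1 < j) by (apply tinv; auto; lia).
        exists i1; split; auto; lia.
    + left. intros j Hj Hjl [_ Hw]. left. apply NNPP; intro; apply Hno; eauto.
  - intros [Rl | Rl] j Hj Hjl Hin.
    + destruct (Rl j Hj Hjl Hin) as [?|(i & _ & [])]; auto.
    + apply Rl; auto; split; [lia | exact I].
Qed.

Lemma rel_ok fuel : forall m n k, m <= fuel -> ltw k lam ->
  (sat' k (Release (Itv m n) a b) <-> sat' k (relT fuel m n a b)).
Proof.
  induction fuel as [|f IH]; intros m n k Hm Hk.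
  - assert (m = 0) by lia; subst. apply rel_base; auto.
  - destruct m as [|m']. { apply rel_base; auto. }
    cbn [relT].
    split.
    + intros Rl.
      destruct (classic (sat' k a)) as [Hak|Hnak]; [left; auto|right].
      destruct (classic (ltw (k+1) lam)) as [Hk1|Hk1].
      2:{ left. norm. split; intros (? & _); contradiction. }
      right.
      pose proof (St k Hk1) as Hd.
      destruct (le_lt_dec (S m') (tau (k+1) - tau k)).
      * norm.
        destruct (classic (exists j1, k <= j1 /\ ltw j1 lam /\ (S m' <= tau j1 - tau k /\ ltw (tau j1 - tau k) n) /\ ~ sat' j1 b))
          as [(j1 & Hj1 & Hj1l & (Hlo1 & Hw1) & Hnb1) | Hno].
        -- right. left. split; auto. split; [|split; [lia|exact I]].
           intros j Hj Hjl _.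
           destruct (classic (sat' j b)) as [Hb|Hnb]; [left; auto|right].
           destruct (Rl j1 Hj1 Hj1l (conj Hlo1 Hw1)) as [?|(i1 & Hi1 & Ha1)]; [contradiction|].
           destruct (Nat.eq_dec i1 k). { subst; contradiction. }
           pose proof (tmono (k+1) j Hj Hjl).
           destruct (classic (ltw (tau j - tau k) n)) as [Hw|Hw].
           ++ assert (Hjk : k <= j) by lia. assert (Hlj : S m' <= tau j - tau k) by lia.
              destruct (Rl j Hjk Hjl (conj Hlj Hw)) as [?|(i & Hi & Ha)]; [contradiction|].
              destruct (Nat.eq_dec i k). { subst; contradiction. }
              exists i; split; auto; lia.
           ++ pose proof (ltw_lt _ _ _ Hw1 Hw).
              pose proof (tmono k j1 Hj1 Hj1l).
              assert (j1 < j) by (apply tinv; auto; lia).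
              exists i1; split; auto; lia.
        -- left. intros j Hj Hjl Hin. left. apply NNPP; intro; apply Hno; eauto.
      * right. right. apply sat_bigor. exists (tau (k+1) - tau k). split; [lia|]. norm.
        split; auto. split; [|lia].
        apply (proj1 (IH (S m' - (tau (k+1) - tau k)) (subw n (tau (k+1) - tau k)) (k+1) ltac:(lia) Hk1)). norm.
        intros j Hj Hjl (Hlo & Hhi). rewrite ltw_subw in Hhi.
        pose proof (tmono (k+1) j Hj Hjl).
        assert (Hjk : k <= j) by lia.
        destruct (Rl j Hjk Hjl) as [Hb | (i & Hi & Ha)].
        { split; [lia|]. replace (tau j - tau k) with (tau j - tau (k+1) + (tau (k+1) - tau k)) by lia. auto. }
        { left; auto. }
        destruct (Nat.eq_dec i k). { subst; contradiction. }
        right; exists i; split; auto; lia.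
    + intros [Ha | [Hneg | [Hh | [Hp | Hbig]]]].
      * norm. intros j Hj Hjl (Hlo & _). destruct (Nat.eq_dec j k). { subst; lia. }
        right; exists k; split; auto; lia.
      * norm. destruct Hneg as [Hn1 _]. intros j Hj Hjl (Hlo & _).
        destruct (Nat.eq_dec j k). { subst; lia. }
        exfalso; apply Hn1. split; [apply ltw_mono with j; auto; lia|]. repeat split; auto; lia.
      * norm. intros j Hj Hjl Hin. destruct (Hh j Hj Hjl Hin) as [?|(i & _ & [])]; auto.
      * norm. destruct Hp as (Hk1 & Hrl & Hd & _). intros j Hj Hjl (Hlo & _).
        destruct (Nat.eq_dec j k). { subst; lia. }
        assert (Hjk : k + 1 <= j) by lia.
        destruct (Hrl j Hjk Hjl (conj (Nat.le_0_l _) I)) as [?|(i & ? & ?)]; [left; auto|right; exists i; split; auto; lia].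
      * apply sat_bigor in Hbig. destruct Hbig as (d & Hd & Hn). norm.
        destruct Hn as (Hk1 & Hu & Hd1 & Hd2).
        pose proof (proj2 (IH (S m' - d) (subw n d) (k+1) ltac:(lia) Hk1) Hu) as Hu'. norm.
        intros j Hj Hjl (Hlo & Hhi).
        destruct (Nat.eq_dec j k). { subst; lia. }
        assert (Hjk : k + 1 <= j) by lia.
        pose proof (tmono (k+1) j Hjk Hjl). pose proof (St k Hk1).
        destruct (Hu' j Hjk Hjl) as [?|(i & ? & ?)]; [| left; auto | right; exists i; split; auto; lia].
        split; [lia|]. rewrite ltw_subw.
        replace (tau j - tau (k+1) + d) with (tau j - tau k) by lia. auto.
Qed.

End Sem.
End Tr.

Definition seqv A (f g : formula A) := forall HH TT tau lam,
  (forall i, ltw (i+1) lam -> tau i < tau (i+1)) ->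
  forall k, ltw k lam -> (sat HH TT tau lam k f <-> sat HH TT tau lam k g).

Lemma tr_ok A (f : formula A) : seqv A f (tr A f).
Proof.
  induction f; intros HH TT tau lam St k Hk; simpl.
  - tauto.
  - tauto.
  - rewrite (IHf1 HH TT tau lam St k Hk), (IHf2 HH TT tau lam St k Hk),
      (IHf1 TT TT tau lam St k Hk), (IHf2 TT TT tau lam St k Hk). tauto.
  - rewrite (IHf1 HH TT tau lam St k Hk), (IHf2 HH TT tau lam St k Hk). tauto.
  - rewrite (IHf1 HH TT tau lam St k Hk), (IHf2 HH TT tau lam St k Hk). tauto.
  - assert (Hk1 : ltw (k-1) lam) by (apply ltw_mono with k; auto; lia).
    rewrite (IHf HH TT tau lam St (k-1) Hk1). tauto.
  - transitivity (sat HH TT tau lam k (Since i (tr A f1) (tr A f2))).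
    + simpl. split; intros (j & Hj & Hin & Hb & Ha); exists j; refine (conj Hj (conj Hin (conj _ _))).
      * apply (IHf2 HH TT tau lam St j (ltw_mono _ _ _ Hj Hk)); auto.
      * intros l Hl. apply (IHf1 HH TT tau lam St l (ltw_mono _ _ _ (proj2 Hl) Hk)); auto.
      * apply (IHf2 HH TT tau lam St j (ltw_mono _ _ _ Hj Hk)); auto.
      * intros l Hl. apply (IHf1 HH TT tau lam St l (ltw_mono _ _ _ (proj2 Hl) Hk)); auto.
    + destruct i as [m n]. simpl. apply since_ok; auto.
  - transitivity (sat HH TT tau lam k (Trigger i (tr A f1) (tr A f2))).
    + simpl. split; intros Tr j Hj Hin; destruct (Tr j Hj Hin) as [Hb | (l & Hl & Ha)].
      * left. apply (IHf2 HH TT tau lam St j (ltw_mono _ _ _ Hj Hk)); auto.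
      * right. exists l. split; auto. apply (IHf1 HH TT tau lam St l (ltw_mono _ _ _ (proj2 Hl) Hk)); auto.
      * left. apply (IHf2 HH TT tau lam St j (ltw_mono _ _ _ Hj Hk)); auto.
      * right. exists l. split; auto. apply (IHf1 HH TT tau lam St l (ltw_mono _ _ _ (proj2 Hl) Hk)); auto.
    + destruct i as [m n]. simpl. apply trig_ok; auto.
  - split; intros (Hk1 & Hf & Hin); refine (conj Hk1 (conj _ Hin)); apply (IHf HH TT tau lam St (k+1) Hk1); auto.
  - transitivity (sat HH TT tau lam k (Until i (tr A f1) (tr A f2))).
    + simpl. split; intros (j & Hj & Hjl & Hin & Hb & Ha); exists j; refine (conj Hj (conj Hjl (conj Hin (conj _ _)))).
      * apply (IHf2 HH TT tau lam St j Hjl); auto.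
      * intros l Hl. apply (IHf1 HH TT tau lam St l (ltw_mono _ l j ltac:(lia) Hjl)); auto.
      * apply (IHf2 HH TT tau lam St j Hjl); auto.
      * intros l Hl. apply (IHf1 HH TT tau lam St l (ltw_mono _ l j ltac:(lia) Hjl)); auto.
    + destruct i as [m n]. simpl. apply until_ok; auto.
  - transitivity (sat HH TT tau lam k (Release i (tr A f1) (tr A f2))).
    + simpl. split; intros Rl j Hj Hjl Hin; destruct (Rl j Hj Hjl Hin) as [Hb | (l & Hl & Ha)].
      * left. apply (IHf2 HH TT tau lam St j Hjl); auto.
      * right. exists l. split; auto. apply (IHf1 HH TT tau lam St l (ltw_mono _ l j ltac:(lia) Hjl)); auto.
      * left. apply (IHf2 HH TT tau lam St j Hjl); auto.
      * right. exists l. split; auto. apply (IHf1 HH TT tau lam St l (ltw_mono _ l j ltac:(lia) Hjl)); auto.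
    + destruct i as [m n]. simpl. apply rel_ok; auto.
Qed.

Theorem corollary4 (A : Type) (f : formula A) :
  exists g : formula A, unf g /\ mequiv f g.
Proof.
  exists (tr A f). split; [apply unf_tr|].
  intros M HM k Hk. unfold msat. simpl.
  pose proof (@tr_ok A f (tr_H M) (tr_T M) (tr_tau M) (tr_len M) HM k Hk) as E1.
  pose proof (@tr_ok A f (tr_T M) (tr_T M) (tr_tau M) (tr_len M) HM k Hk) as E2.
  tauto.
Qed.
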